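(* Let $N_t, N_c, N_{RF}, K, N_s$ be positive integers with $K N_s \le N_{RF}$. Let $\theta_1,\dots,\theta_{N_c}\in\mathbb{R}$, let $\mathbf{c}=\frac{1}{\sqrt{N_c}}[e^{j\theta_1},\dots,e^{j\theta_{N_c}}]^T\in\mathbb{C}^{N_c}$, and let $\mathbf{C}=\mathrm{blkdiag}(\mathbf{c},\dots,\mathbf{c})\in\mathbb{C}^{N_cN_{RF}\times N_{RF}}$ be the block-diagonal matrix with $N_{RF}$ copies of $\mathbf{c}$ on its diagonal. Let $\mathbf{F}_{\mathrm{opt}}\in\mathbb{C}^{N_t\times KN_s}$, let $\mathbf{S}\in\{0,1\}^{N_t\times N_cN_{RF}}$, let $\alpha\in\mathbb{R}$, and let $\mathbf{F}_{\mathrm{DD}}\in\mathbb{C}^{N_{RF}\times KN_s}$ satisfy $\mathbf{F}_{\mathrm{DD}}^H\mathbf{F}_{\mathrm{DD}}=\mathbf{I}_{KN_s}$. Set $\mathbf{F}_{\mathrm{BB}}=\alpha\mathbf{F}_{\mathrm{DD}}$. Then $$\left\|\mathbf{F}_{\mathrm{opt}}-\mathbf{S}\mathbf{C}\mathbf{F}_{\mathrm{BB}}\right\|_F^2\le \left\|\mathbf{F}_{\mathrm{opt}}\right\|_F^2-2\alpha\,\Re\,\mathrm{tr}\!\left(\mathbf{F}_{\mathrm{DD}}\mathbf{F}_{\mathrm{opt}}^H\mathbf{S}\mathbf{C}\right)+\alpha^2\left\|\mathbf{S}\right\|_F^2 .$$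
   Context: $j$ denotes the imaginary unit, $(\cdot)^H$ the conjugate transpose, $\|\cdot\|_F$ the Frobenius norm, $\mathrm{tr}$ the trace and $\Re$ the real part. In the application, $\mathbf{S}\mathbf{C}$ is the analog precoder built from $N_c$ fixed phase shifters and a binary switch matrix $\mathbf{S}$, and $\mathbf{F}_{\mathrm{opt}}$ is a fully digital precoder to be approximated. *)

(* Defs.v *)
From HB Require Import structures.
From mathcomp Require Import all_boot all_order all_algebra.
From mathcomp Require Import reals trigo.
From mathcomp Require Import complex.
Set Implicit Arguments. Unset Strict Implicit. Unset Printing Implicit Defensive.
Import Order.TTheory GRing.Theory Num.Theory.
Local Open Scope ring_scope.

Definition cexpj {R : realType} (t : R) : R[i] := Complex (cos t) (sin t).

Definition ctrmx {R : rcfType} {m n : nat} (A : 'M[R[i]]_(m, n)) : 'M[R[i]]_(n, m) :=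
  map_mx (@conjc R) A^T.

Definition frob2 {R : rcfType} {m n : nat} (A : 'M[R[i]]_(m, n)) : R :=
  \sum_(i < m) \sum_(j < n) ((complex.Re (A i j)) ^+ 2 + (complex.Im (A i j)) ^+ 2).

Definition cvec {R : realType} {Nc : nat} (theta : 'I_Nc -> R) : 'cV[R[i]]_Nc :=
  \col_(a < Nc) ((((Num.sqrt (Nc%:R : R))^-1)%:C)%C * cexpj (theta a)).

Definition blkdiag {R : rcfType} {m : nat} (n : nat) (c : 'cV[R[i]]_m)
  : 'M[R[i]]_(m * n, n) :=
  \matrix_(i < m * n, k < n)
    \sum_(a < m) (if (i : nat) == (k * m + a)%N then c a ord0 else 0).

(* Main.v *)
Require Import Defs.
From HB Require Import structures.
From mathcomp Require Import all_boot all_order all_algebra.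
From mathcomp Require Import reals trigo.
From mathcomp Require Import complex.
From mathcomp Require Import zify.
From mathcomp Require Import ring lra.
Import Order.TTheory GRing.Theory Num.Theory.
Local Open Scope ring_scope.

Module Aux.
Set Implicit Arguments. Unset Strict Implicit. Unset Printing Implicit Defensive.

Section G.
Variable R : rcfType.
Implicit Types x y : R[i].

Lemma ReD x y : complex.Re (x + y) = complex.Re x + complex.Re y.
Proof. by case: x; case: y. Qed.
Lemma ReN x : complex.Re (- x) = - complex.Re x.
Proof. by case: x. Qed.
Lemma ReB x y : complex.Re (x - y) = complex.Re x - complex.Re y.
Proof. by rewrite ReD ReN. Qed.
Lemma Re0 : complex.Re (0 : R[i]) = 0. Proof. by []. Qed.
Lemma ReJ x : complex.Re (conjc x) = complex.Re x. Proof. by case: x. Qed.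
Lemma ReMr (a : R) x : complex.Re ((a%:C)%C * x) = a * complex.Re x.
Proof. case: x => u v /=; rewrite mul0r subr0. done. Qed.
Lemma Re_sum (I : finType) (F : I -> R[i]) :
  complex.Re (\sum_i F i) = \sum_i complex.Re (F i).
Proof. exact: (big_morph _ ReD Re0). Qed.
Lemma Re_mulJ x : complex.Re (x * conjc x) = complex.Re x ^+ 2 + complex.Im x ^+ 2.
Proof. case: x => u v /=. rewrite !expr2. by rewrite mulrN opprK. Qed.
Lemma conjcD x y : conjc (x + y) = conjc x + conjc y. Proof. exact: rmorphD. Qed.
Lemma conjcM x y : conjc (x * y) = conjc x * conjc y. Proof. exact: rmorphM. Qed.

Lemma ctrmxM m n p (A : 'M[R[i]]_(m, n)) (B : 'M[R[i]]_(n, p)) :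
  ctrmx (A *m B) = ctrmx B *m ctrmx A.
Proof.
apply/matrixP => i j; rewrite !mxE rmorph_sum; apply: eq_bigr => k _.
by rewrite !mxE rmorphM mulrC.
Qed.
Lemma ctrmxD m n (A B : 'M[R[i]]_(m, n)) : ctrmx (A + B) = ctrmx A + ctrmx B.
Proof. by apply/matrixP => i j; rewrite !mxE rmorphD. Qed.
Lemma ctrmxN m n (A : 'M[R[i]]_(m, n)) : ctrmx (- A) = - ctrmx A.
Proof. by apply/matrixP => i j; rewrite !mxE rmorphN. Qed.
Lemma ctrmxB m n (A B : 'M[R[i]]_(m, n)) : ctrmx (A - B) = ctrmx A - ctrmx B.
Proof. by rewrite ctrmxD ctrmxN. Qed.
Lemma ctrmxZ m n (a : R) (A : 'M[R[i]]_(m, n)) : ctrmx ((a%:C)%C *: A) = (a%:C)%C *: ctrmx A.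
Proof. apply/matrixP => i j; rewrite !mxE rmorphM; congr (_ * _); by rewrite /= oppr0. Qed.
Lemma ctrmxK m n (A : 'M[R[i]]_(m, n)) : ctrmx (ctrmx A) = A.
Proof. by apply/matrixP => i j; rewrite !mxE conjcK. Qed.
Lemma ctrmx1 n : ctrmx (1%:M : 'M[R[i]]_n) = 1%:M.
Proof. apply/matrixP => i j; rewrite !mxE eq_sym; by case: (i == j); apply/eqP; rewrite eq_complex /= ?oppr0 ?eqxx. Qed.
Lemma tr_ctrmx n (A : 'M[R[i]]_n) : \tr (ctrmx A) = conjc (\tr A).
Proof. by rewrite /mxtrace rmorph_sum; apply: eq_bigr => i _; rewrite !mxE. Qed.

Lemma frob2E m n (A : 'M[R[i]]_(m, n)) : frob2 A = complex.Re (\tr (A *m ctrmx A)).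
Proof.
rewrite /frob2 /mxtrace Re_sum; apply: eq_bigr => i _.
rewrite mxE Re_sum; apply: eq_bigr => j _. by rewrite !mxE Re_mulJ.
Qed.
Lemma frob2_ge0 m n (A : 'M[R[i]]_(m, n)) : 0 <= frob2 A.
Proof. by apply: sumr_ge0 => i _; apply: sumr_ge0 => j _; rewrite addr_ge0 // sqr_ge0. Qed.

Lemma bessel m n p (B : 'M[R[i]]_(m, n)) (Q : 'M[R[i]]_(n, p)) :
  ctrmx Q *m Q = 1%:M -> frob2 (B *m Q) <= frob2 B.
Proof.
move=> hQ.
set P := Q *m ctrmx Q.
have hP : ctrmx (1%:M - P) = 1%:M - P by rewrite ctrmxB ctrmx1 /P ctrmxM ctrmxK.
have hPP : (1%:M - P) *m (1%:M - P) = 1%:M - P.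
  rewrite mulmxBl mul1mx mulmxBr mulmx1 /P mulmxA -(mulmxA Q) hQ mulmx1.
  by rewrite subrr subr0.
have E : frob2 B = frob2 (B *m Q) + frob2 (B *m (1%:M - P)).
  rewrite !frob2E -ReD; congr complex.Re; rewrite -mxtraceD; congr mxtrace.
  rewrite !ctrmxM hP -!mulmxA (mulmxA (1%:M - P)) hPP.
  rewrite mulmxBl mul1mx mulmxBr /P -!mulmxA.
  by rewrite addrC subrK.
by rewrite E lerDl frob2_ge0.
Qed.
End G.


Lemma sum_ifeq (T : nmodType) N n (x : T) : (n < N)%N ->
  \sum_(i < N) (if (i : nat) == n then x else 0) = x.
Proof.
move=> h; rewrite (bigD1 (Ordinal h)) //= eqxx big1 ?addr0 // => i hi.
case: eqP => // e; case/negP: hi; apply/eqP/val_inj; exact: e.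
Qed.

Lemma idx_inj Nc k l a b : (a < Nc)%N -> (b < Nc)%N ->
  (k * Nc + a == l * Nc + b)%N = (k == l) && (a == b).
Proof.
move=> ha hb; apply/eqP/andP => [e|[/eqP -> /eqP ->]] //.
have e1 : a = b.
  by move: (congr1 (modn^~ Nc) e); rewrite !modnMDl !modn_small.
subst b; split => //.
have hN : (0 < Nc)%N by lia.
by move/eqP: e; rewrite eqn_add2r eqn_pmul2r.
Qed.

Lemma conjM_self (R : rcfType) (x : R[i]) :
  conjc x * x = ((complex.Re x ^+ 2 + complex.Im x ^+ 2)%:C)%C.
Proof.
case: x => u v; apply/eqP; rewrite eq_complex /= !expr2; apply/andP; split; apply/eqP.
  by rewrite mulNr opprK.
rewrite mulNr (mulrC u); exact: (subrr (v * u)).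
Qed.

Lemma cvec_norm (R : realType) Nc (theta : 'I_Nc -> R) : (0 < Nc)%N ->
  \sum_(a < Nc) conjc (cvec theta a ord0) * cvec theta a ord0 = 1.
Proof.
move=> hN.
under eq_bigr => a _ do rewrite conjM_self mxE /= !mul0r subr0 addr0 !exprMn -mulrDr cos2Dsin2 mulr1.
rewrite sumr_const card_ord.
set s := (Num.sqrt _)^-1.
have -> : s ^+ 2 = (Nc%:R)^-1.
  by rewrite /s exprVn sqr_sqrtr // ler0n.
by rewrite -raddfMn /= -[_ *+ Nc]mulr_natl mulfV ?rmorph1 // pnatr_eq0 -lt0n hN.
Qed.


Lemma idx_lt m n (k : 'I_n) (a : 'I_m) : (k * m + a < m * n)%N.
Proof. have := ltn_ord k; have := ltn_ord a; nia. Qed.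

Lemma blk_orth (R : rcfType) m n (c : 'cV[R[i]]_m) :
  \sum_a conjc (c a ord0) * c a ord0 = 1 ->
  ctrmx (blkdiag n c) *m blkdiag n c = 1%:M.
Proof.
move=> hc; apply/matrixP => k l; rewrite !mxE.
under eq_bigr => i _ do rewrite !mxE rmorph_sum mulr_suml.
rewrite exchange_big /=.
under eq_bigr => a _ do (under eq_bigr => i _ do rewrite mulr_sumr; rewrite exchange_big /=).
have step : forall (i : 'I_(m * n)) (A B : nat) (x y : R[i]),
  conjc (if (i : nat) == A then x else 0) * (if (i : nat) == B then y else 0)
  = if (i : nat) == A then (if A == B then conjc x * y else 0) else 0.
  move=> i A B x y; case: eqP => [->|]; last by rewrite rmorph0 mul0r.
  by case: eqP => _ //; rewrite mulr0.
under eq_bigr => a _ do under eq_bigr => b _ do under eq_bigr => i _ do rewrite step.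
under eq_bigr => a _ do under eq_bigr => b _ do rewrite sum_ifeq ?idx_lt // idx_inj //.
case: ((k : nat) =P l) => [/val_inj <-|hkl]; last first. have hkl2 : (k == l) = false by apply/negbTE; apply/eqP => e; apply: hkl; rewrite e. rewrite hkl2 /=. by rewrite big1 // => a _; rewrite big1 // => b _; move/eqP: hkl => /negbTE ->.
rewrite eqxx -hc; apply: eq_bigr => a _.
under eq_bigr => b _ do rewrite eq_sym.
rewrite /= (bigD1 a) //= eqxx big1 ?addr0 // => b hb; have -> : ((b : nat) == a) = false by apply/negbTE. by [].
Qed.


Lemma entry_id (R : rcfType) (a : R) (x y : R[i]) :
  complex.Re (x - (a%:C)%C * y) ^+ 2 + complex.Im (x - (a%:C)%C * y) ^+ 2
  = (complex.Re x ^+ 2 + complex.Im x ^+ 2)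
    - 2 * a * (complex.Re (y * conjc x))
    + a ^+ 2 * (complex.Re y ^+ 2 + complex.Im y ^+ 2).
Proof. case: x => u v; case: y => p q /=. ring. Qed.

Lemma expand (R : rcfType) m n (F G : 'M[R[i]]_(m, n)) (a : R) :
  frob2 (F - (a%:C)%C *: G) = frob2 F
   - 2 * a * complex.Re (\tr (G *m ctrmx F)) + a ^+ 2 * frob2 G.
Proof.
rewrite /frob2 /mxtrace Re_sum !mulr_sumr -sumrB -big_split.
apply: eq_bigr => i _; rewrite !mxE Re_sum !mulr_sumr -sumrB -big_split.
apply: eq_bigr => j _; rewrite !mxE entry_id //.
Qed.

End Aux.
Import Aux.

Theorem lemma1 (R : realType) (Nt Nc NRF K Ns : nat)
  (hNt : (0 < Nt)%N) (hNc : (0 < Nc)%N) (hNRF : (0 < NRF)%N)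
  (hK : (0 < K)%N) (hNs : (0 < Ns)%N) (hKNs : (K * Ns <= NRF)%N)
  (theta : 'I_Nc -> R)
  (Fopt : 'M[R[i]]_(Nt, K * Ns))
  (S : 'M[R[i]]_(Nt, Nc * NRF))
  (hS : forall i j, S i j = 0 \/ S i j = 1)
  (alpha : R)
  (FDD : 'M[R[i]]_(NRF, K * Ns))
  (hFDD : ctrmx FDD *m FDD = 1%:M) :
  let C := blkdiag NRF (cvec theta) in
  let FBB := (alpha%:C)%C *: FDD in
  frob2 (Fopt - S *m C *m FBB)
  <= frob2 Fopt
     - 2 * alpha * complex.Re (\tr (FDD *m ctrmx Fopt *m S *m C))
     + alpha ^+ 2 * frob2 S.
Proof.
cbv zeta; set C := blkdiag NRF (cvec theta); set FBB := (alpha%:C)%C *: FDD.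
have hC : ctrmx C *m C = 1%:M := @blk_orth _ _ NRF _ (cvec_norm theta hNc).
have hG : frob2 (S *m C *m FDD) <= frob2 S := le_trans (bessel (S *m C) hFDD) (bessel S hC).
have -> : S *m C *m FBB = (alpha%:C)%C *: (S *m C *m FDD) by rewrite /FBB scalemxAr.
have -> : \tr (FDD *m ctrmx Fopt *m S *m C) = \tr (S *m C *m FDD *m ctrmx Fopt).
  by rewrite -(mulmxA (FDD *m ctrmx Fopt)) mxtrace_mulC mulmxA.
set G := S *m C *m FDD.
by rewrite expand lerD2l ler_wpM2l ?sqr_ge0.
Qed.
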